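(* For every $\lambda$ and all $(x,p)$ with pairwise distinct $x_i$, $$\mathbf{e}^T(\lambda-L)^\vee\mathbf{e}=\operatorname{tr}\big((\lambda-L)^\vee\big)=\Delta'(\lambda),$$ and moreover $\{\operatorname{tr}L,\mathcal{G}(\lambda)\}_0=\{\operatorname{tr}L,\mathcal{E}(\lambda)\}_0=\Delta'(\lambda)$, where $\mathcal{G}(\lambda)=\operatorname{tr}(X(\lambda-L)^\vee)$ and $\mathcal{E}(\lambda)=\mathbf{x}^T(\lambda-L)^\vee\mathbf{e}$.
   Context: Fix $n\ge1$. On the open subset of $\mathbb{R}^{2n}$ with coordinates $(x_1,\dots,x_n,p_1,\dots,p_n)$ where the $x_i$ are pairwise distinct, let $L$ be the $n\times n$ matrix with $L_{ij}=p_i\delta_{ij}+(1-\delta_{ij})/(x_i-x_j)$ and $X=\mathrm{diag}(x_1,\dots,x_n)$. $A^\vee$ denotes the adjugate of a square matrix $A$. $\Delta(\lambda)=\det(\lambda\,\mathrm{Id}-L)$, $\Delta'(\lambda)=\frac{d}{d\lambda}\Delta(\lambda)$, $\mathbf{e}=(1,\dots,1)^T$, $\mathbf{x}=(x_1,\dots,x_n)^T$. $\{\cdot,\cdot\}_0$ is the canonical bracket with $\{p_i,x_j\}_0=\delta_{ij}$, $\{x_i,x_j\}_0=\{p_i,p_j\}_0=0$. *)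

(* Defs.v *)
From HB Require Import structures.
From mathcomp Require Import all_boot all_order all_algebra.
Set Implicit Arguments. Unset Strict Implicit. Unset Printing Implicit Defensive.
Import Order.TTheory GRing.Theory Num.Theory.
Local Open Scope ring_scope.

Section CM.
Variables (R : realFieldType) (n : nat).

Definition Lmat (x p : 'I_n -> R) : 'M[R]_n :=
  \matrix_(i, j) (if i == j then p i else (x i - x j)^-1).

Definition Xmat (x : 'I_n -> R) : 'M[R]_n := diag_mx (\row_i x i).

Definition adjL (lam : R) (x p : 'I_n -> R) : 'M[R]_n :=
  \adj (lam%:M - Lmat x p).

(* Delta'(lambda): derivative of the characteristic polynomial
   det(lambda Id - L) (char_poly uses the convention det('X Id - A)). *)
Definition DeltaP (lam : R) (x p : 'I_n -> R) : R :=
  (char_poly (Lmat x p))^`().[lam].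

Definition trL (x p : 'I_n -> R) : R := \tr (Lmat x p).
Definition Gfun (lam : R) (x p : 'I_n -> R) : R := \tr (Xmat x *m adjL lam x p).
Definition Efun (lam : R) (x p : 'I_n -> R) : R :=
  \sum_i \sum_j x i * adjL lam x p i j.

Definition upd (v : 'I_n -> R) (i : 'I_n) (t : R) : 'I_n -> R :=
  fun j => if j == i then t else v j.

End CM.

Definition is_deriv (R : realFieldType) (f : R -> R) (a l : R) : Prop :=
  forall eps : R, 0 < eps -> exists2 d : R, 0 < d &
    forall h : R, 0 < `|h| < d -> `|(f (a + h) - f a) / h - l| < eps.

(* the canonical bracket {f,g}_0 at (x,p) equals v, where
   {f,g}_0 = sum_i (df/dp_i dg/dx_i - df/dx_i dg/dp_i), so {p_i,x_j}_0 = delta_ij,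
   and all partial derivatives involved exist. *)
Definition bracket0_is (R : realFieldType) (n : nat)
    (f g : ('I_n -> R) -> ('I_n -> R) -> R) (x p : 'I_n -> R) (v : R) : Prop :=
  exists (fx fp gx gp : 'I_n -> R),
    [/\ forall i, is_deriv (fun t => f (upd x i t) p) (x i) (fx i),
        forall i, is_deriv (fun t => f x (upd p i t)) (p i) (fp i),
        forall i, is_deriv (fun t => g (upd x i t) p) (x i) (gx i),
        forall i, is_deriv (fun t => g x (upd p i t)) (p i) (gp i) &
        v = \sum_i (fp i * gx i - fx i * gp i)].

(* Main.v *)
Require Import Defs.
From HB Require Import structures.
From mathcomp Require Import all_boot all_order all_algebra.
From mathcomp Require Import ring lra fingroup perm.
From Stdlib Require Import FunctionalExtensionality.
Import Order.TTheory GRing.Theory Num.Theory.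
Local Open Scope ring_scope.

Section Alg.
Variable R : realFieldType.

Lemma deriv_prod_seq (I : eqType) (r : seq I) (F : I -> {poly R}) :
  uniq r ->
  (\prod_(i <- r) F i)^`() = \sum_(i <- r) (F i)^`() * \prod_(j <- r | j != i) F j.
Proof.
elim: r => [|a r IH] /=; first by rewrite !big_nil derivC.
case/andP=> anr ur.
rewrite !big_cons derivM IH // eqxx /=.
have -> : \prod_(j <- r | j != a) F j = \prod_(j <- r) F j.
  rewrite big_seq_cond [RHS]big_seq_cond; apply: eq_bigl => j.
  case jr: (j \in r) => //=; apply/negP => /eqP ja; by rewrite -ja jr in anr.
congr (_ + _); rewrite big_distrr /= big_seq [RHS]big_seq; apply: eq_bigr => i ir.
rewrite big_cons.
have -> : (a != i) = true by apply/negP => /eqP ai; rewrite ai ir in anr.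
by rewrite mulrCA.
Qed.

Lemma deriv_prod_fin (I : finType) (F : I -> {poly R}) :
  (\prod_i F i)^`() = \sum_i (F i)^`() * \prod_(j | j != i) F j.
Proof. exact: deriv_prod_seq (index_enum_uniq I). Qed.

Lemma deriv_sign (b : bool) (q : {poly R}) : ((-1) ^+ b * q)^`() = (-1) ^+ b * q^`().
Proof. by case: b; rewrite ?expr0 ?mul1r // expr1 !mulN1r derivN. Qed.

Lemma deriv_det_char (n : nat) (L : 'M[R]_n) :
  (char_poly L)^`() = \tr (\adj (char_poly_mx L)).
Proof.
rewrite /char_poly /determinant (big_morph _ (@derivD R) (@deriv0 R)).
under eq_bigr do rewrite deriv_sign deriv_prod_fin big_distrr.
rewrite exchange_big /=; apply: eq_bigr => i _.
rewrite mxE expand_cofactor [RHS]big_mkcond /=; apply: eq_bigr => s _.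
rewrite !mxE derivB derivMn derivX derivC subr0 mulrA mulrnAr mulr1.
rewrite eq_sym; case: eqP => _; last by rewrite mulr0n mul0r.
rewrite mulr1n; congr (_ * _); apply: eq_bigl => k; by rewrite eq_sym.
Qed.

Lemma part2 (n : nat) (lam : R) (x p : 'I_n -> R) :
  \tr (adjL lam x p) = DeltaP lam x p.
Proof.
rewrite /DeltaP deriv_det_char /mxtrace horner_sum /adjL; apply: eq_bigr => i _.
have -> : lam%:M - Lmat x p = map_mx (horner_eval lam) (char_poly_mx (Lmat x p)).
  apply/matrixP => a b; rewrite !mxE /horner_eval.
  by rewrite hornerD hornerN hornerMn hornerX hornerC.
have := map_mx_adj (horner_eval lam) (char_poly_mx (Lmat x p)).
move/matrixP => /(_ i i); rewrite mxE => <-; by [].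
Qed.

Lemma part1 (n : nat) (lam : R) (x p : 'I_n -> R) : injective x ->
  \sum_i \sum_j adjL lam x p i j = \tr (adjL lam x p).
Proof.
move=> xinj.
set A := lam%:M - Lmat x p; set B := adjL lam x p.
pose K : 'M[R]_n := Xmat x *m A - A *m Xmat x.
have KE : forall i j, K i j = (i == j)%:R - 1.
  move=> i j; rewrite /K /Xmat mul_diag_mx mul_mx_diag !mxE.
  case: eqP => [->|ne]; first by rewrite mulrC !subrr.
  have nx : x i - x j != 0 by rewrite subr_eq0; apply/eqP => /xinj.
  rewrite mulr0n !sub0r; field; exact nx.
have h0 : \tr (B *m K) = 0.
  rewrite /K mulmxBr linearB /= mulmxA mxtrace_mulC.
  by rewrite !mulmxA /B /adjL mul_mx_adj mul_adj_mx subrr.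
move: h0; rewrite /mxtrace.
under eq_bigr do rewrite mxE.
under eq_bigr do under eq_bigr do rewrite KE mulrBr mulr1.
have E : forall i, \sum_j (B i j * (j == i)%:R - B i j) = B i i - \sum_j B i j.
  move=> i; rewrite sumrB (bigD1 i) //= eqxx mulr1 big1 ?addr0 //.
  by move=> j /negbTE ->; rewrite mulr0.
under eq_bigr do rewrite E.
by rewrite sumrB => /eqP; rewrite subr_eq0 => /eqP.
Qed.
End Alg.

Set Implicit Arguments. Unset Strict Implicit.

Section Calc.
Variable R : realFieldType.

Definition D2 (f : R -> R) (a l : R) : Prop :=
  exists K : R, exists2 d : R, 0 < d &
    forall h, `|h| < d -> `|f (a + h) - f a - l * h| <= K * h ^+ 2.

Lemma D2_deriv f a l : D2 f a l -> is_deriv f a l.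
Proof.
move=> [K [d d0 H]] eps e0.
have K'0 : 0 < `|K| + 1 by rewrite ltr_wpDl.
exists (Num.min d (eps / (`|K| + 1))).
  by rewrite lt_min d0 divr_gt0.
move=> h /andP [h0]; rewrite lt_min => /andP [hd he].
have hn0 : h != 0 by rewrite -normr_gt0.
have -> : (f (a + h) - f a) / h - l = (f (a + h) - f a - l * h) / h by field.
rewrite normf_div ltr_pdivrMr //.
apply: (le_lt_trans (H h hd)).
rewrite -(real_normK (num_real h)).
move: he; rewrite ltr_pdivlMr // => he.
have := ler_norm K.
set u := `|h| in h0 he *.
nra.
Qed.

Lemma D2_ext f g a l : (forall t, f t = g t) -> D2 f a l -> D2 g a l.
Proof. by move=> fg [K [d d0 H]]; exists K; exists d => // h hd; rewrite -!fg; apply: H. Qed.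

Lemma D2_const c a : D2 (fun _ => c) a 0.
Proof. exists 0; exists 1 => // h _; by rewrite !mul0r subrr subr0 normr0. Qed.

Lemma D2_id a : D2 id a 1.
Proof. exists 0; exists 1 => // h _; rewrite /= mul1r mul0r; rewrite (addrC a) addrK subrr normr0 //. Qed.

Lemma D2_add f g a l m : D2 f a l -> D2 g a m -> D2 (fun t => f t + g t) a (l + m).
Proof.
move=> [K1 [d1 d10 H1]] [K2 [d2 d20 H2]].
exists (K1 + K2); exists (Num.min d1 d2); first by rewrite lt_min d10.
move=> h; rewrite lt_min => /andP [h1 h2].
have -> : f (a + h) + g (a + h) - (f a + g a) - (l + m) * h =
   (f (a + h) - f a - l * h) + (g (a + h) - g a - m * h) by ring.
apply: (le_trans (ler_normD _ _)); rewrite mulrDl; apply: lerD; [exact: H1|exact: H2].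
Qed.

Lemma D2_mul f g a l m : D2 f a l -> D2 g a m ->
  D2 (fun t => f t * g t) a (l * g a + f a * m).
Proof.
move=> [K1 [d1 d10 H1]] [K2 [d2 d20 H2]].
pose K1' := `|K1|; pose K2' := `|K2|.
exists (`|l| * `|m| + (`|f a| + `|l|) * K2' + K1' * (`|g a| + `|m| + K2')).
exists (Num.min 1 (Num.min d1 d2)); first by rewrite !lt_min ltr01 d10.
move=> h; rewrite !lt_min => /and3P [h1 hd1 hd2].
have {H1}H1 := H1 h hd1; have {H2}H2 := H2 h hd2.
move: H1 H2.
set F := f (a + h) - f a - l * h; set G := g (a + h) - g a - m * h => H1 H2.
have -> : f (a + h) * g (a + h) - f a * g a - (l * g a + f a * m) * h =
  l * m * h ^+ 2 + (f a + l * h) * G + F * (g a + m * h + G).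
  rewrite /F /G; ring.
have hh : h ^+ 2 = `|h| ^+ 2 by rewrite real_normK ?num_real.
have u0 : 0 <= `|h| by [].
have nF : `|F| <= K1' * `|h| ^+ 2.
  by rewrite -hh; apply: (le_trans H1); rewrite ler_wpM2r ?sqr_ge0 ?ler_norm.
have nG : `|G| <= K2' * `|h| ^+ 2.
  by rewrite -hh; apply: (le_trans H2); rewrite ler_wpM2r ?sqr_ge0 ?ler_norm.
have t1 : `|l * m * h ^+ 2| = `|l| * `|m| * `|h| ^+ 2 by rewrite !normrM ?normrX // expr2.
have t2 : `|(f a + l * h) * G| <= (`|f a| + `|l| * `|h|) * `|G|.
  rewrite normrM ler_wpM2r //; apply: (le_trans (ler_normD _ _)); by rewrite normrM.
have t3 : `|F * (g a + m * h + G)| <= `|F| * (`|g a| + `|m| * `|h| + `|G|).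
  rewrite normrM ler_wpM2l //; apply: (le_trans (ler_normD _ _)); rewrite lerD2r.
  by apply: (le_trans (ler_normD _ _)); rewrite normrM.
apply: (le_trans (ler_normD _ _)); apply: (le_trans (lerD (ler_normD _ _) (lexx _))).
rewrite t1 [in X in _ <= X]hh.
apply: (le_trans (lerD (lerD (lexx _) t2) t3)).
have : 0 <= `|F| by []. have : 0 <= `|G| by [].
have : 0 <= `|l| by []. have : 0 <= `|m| by []. have : 0 <= `|f a| by [].
have : 0 <= `|g a| by []. have : 0 <= K1' by rewrite /K1'. have : 0 <= K2' by rewrite /K2'.
move: nF nG h1 u0.
set u := `|h|.
set nf := `|F|; set ng := `|G|; set nl := `|l|; set nm := `|m|; set nfa := `|f a|; set nga := `|g a|.
move=> nF nG h1 u0 K20 K10 nga0 nfa0 nm0 nl0 ng0 nf0.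
have u2 : u ^+ 2 <= 1 by rewrite expr_le1 // ltW.
have ng1 : ng <= K2' by apply: (le_trans nG); rewrite ler_piMr.
have e1 : (nfa + nl * u) * ng <= (nfa + nl) * (K2' * u ^+ 2).
  have w := ler_piMr (mulr_ge0 nl0 ng0) (ltW h1).
  have w2 := ler_wpM2l (addr_ge0 nfa0 nl0) nG.
  nra.
have e2 : nf * (nga + nm * u + ng) <= K1' * u ^+ 2 * (nga + nm + K2').
  have w := ler_piMr nm0 (ltW h1).
  have w2 : nga + nm * u + ng <= nga + nm + K2' by lra.
  have w3 := ler_wpM2l nf0 w2.
  have w4 := ler_wpM2r (addr_ge0 (addr_ge0 nga0 nm0) K20) nF.
  nra.
have := lerD (lerD (lexx (nl * nm * u ^+ 2)) e1) e2.
move=> e3; apply: (le_trans e3); rewrite le_eqVlt; apply/orP; left; apply/eqP; ring.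
Qed.

Lemma D2_invlin b a : a != b ->
  D2 (fun t => (t - b)^-1) a (- ((a - b)^-1) ^+ 2).
Proof.
move=> ab; have e0 : a - b != 0 by rewrite subr_eq0.
set e := a - b in e0 *.
have ne0 : 0 < `|e| by rewrite normr_gt0.
exists (2 / `|e| ^+ 3); exists (`|e| / 2); first by rewrite divr_gt0.
move=> h hd.
have hw : `|e| <= `|e + h| + `|h|.
  by have := ler_normD (e + h) (- h); rewrite addrK normrN.
have w0 : 0 < `|e + h| by lra.
have eh0 : e + h != 0 by rewrite -normr_gt0.
have -> : (a + h - b)^-1 - (a - b)^-1 - - (a - b)^-1 ^+ 2 * h = h ^+ 2 / (e ^+ 2 * (e + h)).
  have -> : a + h - b = e + h by rewrite /e; ring.
  rewrite -/e; field; rewrite eh0 e0 //.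
rewrite normf_div normrX (normrM (e ^+ 2)) normrX -(real_normK (num_real h)).
set ne := `|e| in ne0 hd hw w0 *; set w := `|e + h| in hw w0 *; set u := `|h| in hd hw *.
rewrite ler_pdivrMr ?mulr_gt0 ?exprn_gt0 //.
have -> : 2 / ne ^+ 3 * u ^+ 2 * (ne ^+ 2 * w) = u ^+ 2 * (2 * w / ne).
  by field; rewrite gt_eqF.
have q1 : 1 <= 2 * w / ne by rewrite ler_pdivlMr // mul1r; lra.
have := sqr_ge0 u; nra.
Qed.

End Calc.

Section Good.
Variables (R : realFieldType) (n : nat) (a : 'I_n -> R).
Implicit Types (f : R -> R) (b l c s u : R).

Lemma D2_eq f b l (l' : R) : l = l' -> D2 f b l -> D2 f b l'.
Proof. by move=> ->. Qed.

Lemma D2_scale c f b l : D2 f b l -> D2 (fun t => c * f t) b (c * l).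
Proof.
move=> H; apply: D2_eq (D2_mul (D2_const c b) H).
by rewrite mul0r add0r.
Qed.

Lemma upd_id k : upd a k (a k) = a.
Proof. by apply: functional_extensionality => j; rewrite /upd; case: eqP => [->|]. Qed.

Lemma sum_ind (i : 'I_n) : \sum_k ((k == i)%:R : R) = 1.
Proof. by rewrite (bigD1 i) //= eqxx big1 ?addr0 // => k /negbTE ->. Qed.

Definition good (phi : ('I_n -> R) -> R) (s : R) :=
  exists d : 'I_n -> R,
    (forall k, D2 (fun t => phi (upd a k t)) (a k) (d k)) /\ \sum_k d k = s.
Definition goodE phi := exists s, good phi s.

Lemma good_eq phi s s' : s = s' -> good phi s -> good phi s'.
Proof. by move=> ->. Qed.

Lemma good_ext phi psi s : (forall y, phi y = psi y) -> good phi s -> good psi s.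
Proof.
move=> e [d [H1 H2]]; exists d; split => // k.
by apply: D2_ext (H1 k) => t; rewrite e.
Qed.

Lemma goodE_ext phi psi : (forall y, phi y = psi y) -> goodE phi -> goodE psi.
Proof. by move=> e [s H]; exists s; apply: good_ext H. Qed.

Lemma good_const c : good (fun _ => c) 0.
Proof. by exists (fun _ => 0); split; [move=> k; apply: D2_const | rewrite big1]. Qed.

Lemma good_coord m : good (fun y => y m) 1.
Proof.
exists (fun k => (k == m)%:R); split; last exact: sum_ind.
move=> k /=; case: (eqVneq k m) => [->|ne].
  by apply: D2_ext (D2_id _) => t; rewrite /upd eqxx.
apply: D2_ext (D2_const (a m) _) => t.
by rewrite /upd eq_sym (negbTE ne).
Qed.

Lemma good_add phi psi s u : good phi s -> good psi u ->
  good (fun y => phi y + psi y) (s + u).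
Proof.
move=> [d [H1 S1]] [e [H2 S2]]; exists (fun k => d k + e k); split.
  by move=> k; apply: D2_add.
by rewrite big_split /= S1 S2.
Qed.

Lemma good_mul phi psi s u : good phi s -> good psi u ->
  good (fun y => phi y * psi y) (s * psi a + phi a * u).
Proof.
move=> [d [H1 S1]] [e [H2 S2]]; exists (fun k => d k * psi a + phi a * e k); split.
  by move=> k; have := D2_mul (H1 k) (H2 k); rewrite upd_id.
by rewrite big_split /= -mulr_suml -mulr_sumr S1 S2.
Qed.

Lemma goodE_mul phi psi : goodE phi -> goodE psi -> goodE (fun y => phi y * psi y).
Proof. by move=> [s H1] [u H2]; eexists; apply: good_mul H1 H2. Qed.

Lemma goodE_add phi psi : goodE phi -> goodE psi -> goodE (fun y => phi y + psi y).
Proof. by move=> [s H1] [u H2]; eexists; apply: good_add H1 H2. Qed.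

Lemma good_opp phi s : good phi s -> good (fun y => - phi y) (- s).
Proof.
move=> H; have := good_mul (good_const (-1)) H.
rewrite mul0r add0r mulN1r; apply: good_ext => y; by rewrite mulN1r.
Qed.

Lemma good_sum (I : Type) (r : seq I) (P : pred I) F (sv : I -> R) :
  (forall i, good (F i) (sv i)) ->
  good (fun y => \sum_(i <- r | P i) F i y) (\sum_(i <- r | P i) sv i).
Proof.
move=> H; elim: r => [|i r IH].
  by rewrite big_nil; apply: good_ext (good_const 0) => y; rewrite big_nil.
rewrite big_cons; case Pi: (P i).
  by apply: good_ext (good_add (H i) IH) => y; rewrite big_cons Pi.
by apply: good_ext IH => y; rewrite big_cons Pi.
Qed.

Lemma goodE_sum (I : Type) (r : seq I) (P : pred I) F :
  (forall i, goodE (F i)) -> goodE (fun y => \sum_(i <- r | P i) F i y).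
Proof.
move=> H; elim: r => [|i r IH].
  by exists 0; apply: good_ext (good_const 0) => y; rewrite big_nil.
case Pi: (P i).
  by apply: goodE_ext (goodE_add (H i) IH) => y; rewrite big_cons Pi.
by apply: goodE_ext IH => y; rewrite big_cons Pi.
Qed.

Lemma good_prod0 (I : Type) (r : seq I) (P : pred I) F :
  (forall i, good (F i) 0) -> good (fun y => \prod_(i <- r | P i) F i y) 0.
Abort.

Lemma goodE_prod (I : Type) (r : seq I) (P : pred I) F :
  (forall i, goodE (F i)) -> goodE (fun y => \prod_(i <- r | P i) F i y).
Proof.
move=> H; elim: r => [|i r IH].
  by exists 0; apply: good_ext (good_const 1) => y; rewrite big_nil.
case Pi: (P i).
  by apply: goodE_ext (goodE_mul (H i) IH) => y; rewrite big_cons Pi.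
by apply: goodE_ext IH => y; rewrite big_cons Pi.
Qed.

Lemma good_prod0 (I : Type) (r : seq I) (P : pred I) F :
  (forall i, good (F i) 0) -> good (fun y => \prod_(i <- r | P i) F i y) 0.
Proof.
move=> H; elim: r => [|i r IH].
  by apply: good_ext (good_const 1) => y; rewrite big_nil.
case Pi: (P i).
  have := good_mul (H i) IH; rewrite mul0r mulr0 addr0.
  by apply: good_ext => y; rewrite big_cons Pi.
by apply: good_ext IH => y; rewrite big_cons Pi.
Qed.

Lemma good_det0 m (M : ('I_n -> R) -> 'M[R]_m) :
  (forall i j, good (fun y => M y i j) 0) -> good (fun y => \det (M y)) 0.
Proof.
move=> H.
have := @good_sum _ (index_enum ('S_m)) predT
  (fun (sg : 'S_m) y => (-1) ^+ sg * \prod_i M y i (sg i)) (fun _ => 0).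
rewrite big1 // => G; apply: G => sg.
have := good_mul (good_const ((-1) ^+ sg)) (good_prod0 (index_enum _) predT (fun i => H i (sg i))).
by rewrite mul0r mulr0 addr0.
Qed.

Lemma goodE_det m (M : ('I_n -> R) -> 'M[R]_m) :
  (forall i j, goodE (fun y => M y i j)) -> goodE (fun y => \det (M y)).
Proof.
move=> H.
apply: (@goodE_sum _ (index_enum ('S_m)) predT
  (fun (sg : 'S_m) y => (-1) ^+ sg * \prod_i M y i (sg i))) => s.
apply: goodE_mul; first by exists 0; apply: good_const.
exact: goodE_prod.
Qed.

Lemma good_adj0 m (M : ('I_n -> R) -> 'M[R]_m) :
  (forall i j, good (fun y => M y i j) 0) -> forall i j, good (fun y => \adj (M y) i j) 0.
Proof.
move=> H i j.
have D : good (fun y => \det (row' j (col' i (M y)))) 0.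
  by apply: good_det0 => k l; apply: good_ext (H _ _) => y; rewrite !mxE.
have := good_mul (good_const ((-1) ^+ (j + i))) D.
rewrite mul0r mulr0 addr0.
by apply: good_ext => y; rewrite mxE.
Qed.

Lemma goodE_adj m (M : ('I_n -> R) -> 'M[R]_m) :
  (forall i j, goodE (fun y => M y i j)) -> forall i j, goodE (fun y => \adj (M y) i j).
Proof.
move=> H i j.
apply: goodE_ext (goodE_mul (goodE_det (M := fun y => row' j (col' i (M y))) _) (ex_intro _ _ (good_const ((-1) ^+ (j + i))))).
  by move=> y; rewrite mxE mulrC.
by move=> k l; apply: goodE_ext (H _ _) => y; rewrite !mxE.
Qed.

End Good.

Section Main.
Variables (R : realFieldType) (n : nat) (lam : R) (x p : 'I_n -> R).
Hypothesis xinj : injective x.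

Lemma good_invdiff (i j : 'I_n) : i != j -> good x (fun y => (y i - y j)^-1) 0.
Proof.
move=> ne; have nji : j != i by rewrite eq_sym.
have xij : x i != x j by apply/negP => /eqP /xinj /eqP; rewrite (negbTE ne).
have xji : x j != x i by rewrite eq_sym.
set c := - ((x i - x j)^-1) ^+ 2.
exists (fun k => c * (k == i)%:R - c * (k == j)%:R); split; last first.
  by rewrite sumrB -!mulr_sumr !sum_ind subrr.
move=> k /=; case: (eqVneq k i) => [->|ki].
  rewrite (negbTE ne) mulr1 mulr0 subr0.
  by apply: D2_ext (D2_invlin xij) => t; rewrite /upd eqxx (negbTE nji).
case: (eqVneq k j) => [->|kj].
  rewrite mulr1 mulr0 sub0r.
  apply: D2_ext (D2_eq _ (D2_scale (-1) (D2_invlin xji))).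
    by move=> t /=; rewrite /upd eqxx (negbTE ne) mulN1r -invrN opprB.
  by rewrite mulN1r opprK -[x j - x i]opprB invrN sqrrN /c opprK.
rewrite !mulr0n !mulr0 subr0; apply: D2_ext (D2_const ((x i - x j)^-1) _) => t.
by rewrite /upd eq_sym (negbTE ki) eq_sym (negbTE kj).
Qed.

Lemma entry_x i j : good x (fun y => (lam%:M - Lmat y p) i j) 0.
Proof.
case: (eqVneq i j) => [<-|ne].
  by apply: good_ext (good_const x (lam - p i)) => y; rewrite !mxE eqxx mulr1n.
apply: good_eq (oppr0 _) _.
apply: good_ext (good_opp (good_invdiff ne)) => y.
by rewrite !mxE (negbTE ne) mulr0n sub0r.
Qed.

Lemma entry_p i j : goodE p (fun q => (lam%:M - Lmat x q) i j).
Proof.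
case: (eqVneq i j) => [<-|ne].
  exists (0 + - 1).
  by apply: good_ext (good_add (good_const p lam) (good_opp (good_coord p i))) => y;
    rewrite !mxE eqxx mulr1n.
exists 0; apply: good_ext (good_const p (- (x i - x j)^-1)) => y.
by rewrite !mxE (negbTE ne) mulr0n sub0r.
Qed.

Lemma trXB (y : 'I_n -> R) (B : 'M[R]_n) : \tr (Xmat y *m B) = \sum_m y m * B m m.
Proof. by rewrite /Xmat mul_diag_mx /mxtrace; apply: eq_bigr => m _; rewrite !mxE. Qed.

Lemma G_x : good x (fun y => Gfun lam y p) (\tr (adjL lam x p)).
Proof.
have := @good_sum _ _ x _ (index_enum 'I_n) predT
  (fun m y => y m * adjL lam y p m m) (fun m => adjL lam x p m m).
move=> G; apply: good_ext (G _) => [y|m]; first by rewrite /Gfun trXB.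
have := good_mul (good_coord x m) (good_adj0 (M := fun y => lam%:M - Lmat y p) entry_x m m).
by rewrite mul1r mulr0 addr0.
Qed.

Lemma E_x : good x (fun y => Efun lam y p) (\tr (adjL lam x p)).
Proof.
rewrite -part1 //.
apply: good_sum => i; apply: good_sum => j.
have := good_mul (good_coord x i) (good_adj0 (M := fun y => lam%:M - Lmat y p) entry_x i j).
by rewrite mul1r mulr0 addr0.
Qed.

Lemma G_p : goodE p (fun q => Gfun lam x q).
Proof.
apply: goodE_ext (goodE_sum (index_enum 'I_n) predT (F := fun m q => x m * adjL lam x q m m) _).
  by move=> q; rewrite /Gfun trXB.
move=> m; apply: goodE_mul; first by exists 0; apply: good_const.
exact: (goodE_adj (M := fun q => lam%:M - Lmat x q) entry_p).
Qed.

Lemma E_p : goodE p (fun q => Efun lam x q).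
Proof.
apply: goodE_sum => i; apply: goodE_sum => j.
apply: goodE_mul; first by exists 0; apply: good_const.
exact: (goodE_adj (M := fun q => lam%:M - Lmat x q) entry_p).
Qed.

Lemma trL_x i : is_deriv (fun t => trL (upd x i t) p) (x i) 0.
Proof.
apply: D2_deriv; apply: D2_ext (D2_const (\sum_k p k) _) => t.
by rewrite /trL /mxtrace; apply: eq_bigr => k _; rewrite mxE eqxx.
Qed.

Lemma trL_p i : is_deriv (fun t => trL x (upd p i t)) (p i) 1.
Proof.
apply: D2_deriv; apply: D2_eq (addr0 1) _.
apply: D2_ext (D2_add (D2_id (p i)) (D2_const (\sum_(k | k != i) p k) _)) => t /=.
rewrite /trL /mxtrace [RHS](bigD1 i) //= mxE eqxx /upd eqxx; congr (_ + _).
by apply: eq_bigr => k ki; rewrite mxE eqxx (negbTE ki).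
Qed.

Lemma bracket_of g s : good x (fun y => g y p) s -> goodE p (fun q => g x q) ->
  bracket0_is (@trL R n) g x p s.
Proof.
move=> [gx [Hx Sx]] [u [gp [Hp _]]].
exists (fun _ => 0), (fun _ => 1), gx, gp; split.
- exact: trL_x.
- exact: trL_p.
- by move=> i; apply: D2_deriv.
- by move=> i; apply: D2_deriv.
- by rewrite -Sx; apply: eq_bigr => i _; rewrite mul1r mul0r subr0.
Qed.

End Main.

Unset Implicit Arguments.

Theorem mainTheorem7 (R : realFieldType) (n : nat) (lam : R) (x p : 'I_n -> R) :
  (0 < n)%N -> injective x ->
  [/\ \sum_i \sum_j adjL lam x p i j = \tr (adjL lam x p),
      \tr (adjL lam x p) = DeltaP lam x p,
      bracket0_is (@trL R n) (Gfun lam) x p (DeltaP lam x p) &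
      bracket0_is (@trL R n) (Efun lam) x p (DeltaP lam x p)].
Proof.
move=> _ xinj; split.
- exact: part1.
- exact: part2.
- by rewrite -part2; apply: bracket_of; [exact: G_x | exact: G_p].
- by rewrite -part2; apply: bracket_of; [exact: E_x | exact: E_p].
Qed.
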